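(* Let jobs $1,\dots,m$ form a feasible set, and let $r\le d$ be times with $r_j\ge r$ and $d_j\le d$ for all $j$. Let $\alpha\ge 1$ and let $\alpha$-DLY be any scheduling policy that, at every time $t$, only runs work of a job $j$ whose current stretch $(t-r_j)/(d_j-r_j)$ is at least $\alpha$. Then the total amount of time during which $\alpha$-DLY runs these jobs (until all are completed) is at most $(d-r)/\alpha$.
   Context: Jobs $j$ have release time $r_j$, due date $d_j>r_j$, work $w_j>0$, and linear speed function $f_j(t)=m_j(t-r_j)$ with $m_j>0$. A single processor runs at most one job at a time, preemption is allowed, and running job $j$ during a set of times $S$ completes $\int_S f_j(t)\,dt$ units of its work. A set of jobs is feasible if some schedule runs each job only within $[r_j,d_j]$ and completes it by $d_j$. *)

(* Defs.v *)
From mathcomp Require Import all_boot all_order all_algebra.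
From mathcomp Require Import all_classical all_reals all_analysis.
Set Implicit Arguments. Unset Strict Implicit. Unset Printing Implicit Defensive.
Import Order.TTheory GRing.Theory Num.Theory.
Local Open Scope classical_set_scope.
Local Open Scope ring_scope.

(* A job: release time r_j, due date d_j, work w_j, slope m_j of the
   linear speed function f_j(t) = m_j (t - r_j). *)
Record job (R : realType) := Job {
  release : R; due : R; work : R; slope : R }.

Definition valid_job (R : realType) (J : job R) : Prop :=
  release J < due J /\ 0 < work J /\ 0 < slope J.

Definition speed (R : realType) (J : job R) (t : R) : R :=
  slope J * (t - release J).

(* A (preemptive, single-processor) schedule assigns to every time t
   either a job index (the job run at time t) or None (idle). *)
Definition schedule (R : realType) (m : nat) := R -> option 'I_m.

Definition run_set (R : realType) (m : nat) (s : schedule R m) (j : 'I_m)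
  : set R := [set t | s t = Some j].

Definition measurable_schedule (R : realType) (m : nat) (s : schedule R m) :=
  forall j : 'I_m, measurable (run_set s j).

Definition work_done (R : realType) (J : job R) (S : set R) : \bar R :=
  (\int[@lebesgue_measure R]_(t in S) (speed J t)%:E)%E.

Definition feasible (R : realType) (m : nat) (jobs : 'I_m -> job R) : Prop :=
  exists s : schedule R m, measurable_schedule s /\
    forall j : 'I_m, run_set s j `<=` `[release (jobs j), due (jobs j)] /\
      ((work (jobs j))%:E <= work_done (jobs j) (run_set s j))%E.

Definition stretch (R : realType) (J : job R) (t : R) : R :=
  (t - release J) / (due J - release J).

Definition alpha_DLY (R : realType) (m : nat) (alpha : R)
  (jobs : 'I_m -> job R) (s : schedule R m) : Prop :=
  measurable_schedule s /\
  (forall (t : R) (j : 'I_m), s t = Some j -> alpha <= stretch (jobs j) t) /\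
  (forall j : 'I_m, work_done (jobs j) (run_set s j) = (work (jobs j))%:E).

Definition busy_time (R : realType) (m : nat) (s : schedule R m) : \bar R :=
  @lebesgue_measure R (\bigcup_(j in [set: 'I_m]) run_set s j).

(* Main.v *)
Require Import Defs.
From mathcomp Require Import all_boot all_order all_algebra.
From mathcomp Require Import all_classical all_reals all_analysis.
From mathcomp Require Import lra measurable_realfun.
Import Order.TTheory GRing.Theory Num.Theory.
Local Open Scope classical_set_scope.
Local Open Scope ring_scope.

Lemma speed_mfun (R : realType) (J : job R) (D : set R) :
  measurable_fun D (fun t : R => ((speed J t)%:E : \bar R)).
Proof.
apply/(measurable_EFinP D (speed J)).
rewrite /speed; apply: measurable_funM.
  exact: (measurable_cst (slope J)).
by apply: measurable_funD.
Qed.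

Lemma dly_bound (R : realType) (J : job R) (a : R) (S : set R) :
  valid_job J -> 1 <= a -> measurable S ->
  (forall t, S t -> a <= stretch J t) ->
  work_done J S = (work J)%:E ->
  ((a * (slope J * (due J - release J)))%:E * lebesgue_measure S <= (work J)%:E)%E.
Proof.
move=> [rd [w0 m0]] a1 mS hS hw.
rewrite -hw /work_done -integral_cst //.
have p0 : 0 < due J - release J by rewrite subr_gt0.
apply: ge0_le_integral => //.
- move=> t _; rewrite /= lee_fin; apply: mulr_ge0; first by lra.
  by apply: mulr_ge0; lra.
- exact: speed_mfun.
- move=> t /hS; rewrite /stretch ler_pdivlMr // => h.
  rewrite /= lee_fin /speed; nra.
Qed.

Lemma feas_bound (R : realType) (J : job R) (S : set R) :
  valid_job J -> measurable S ->
  S `<=` `[release J, due J] ->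
  ((work J)%:E <= work_done J S)%E ->
  ((work J)%:E <= (slope J * (due J - release J))%:E * lebesgue_measure S)%E.
Proof.
move=> [rd [w0 m0]] mS hS hw.
apply: (le_trans hw); rewrite /work_done -integral_cst //.
apply: ge0_le_integral => //.
- move=> t /hS; rewrite /= in_itv /= => /andP[h1 h2].
  by rewrite lee_fin /speed; apply: mulr_ge0; lra.
- exact: speed_mfun.
- move=> t /hS; rewrite /= in_itv /= => /andP[h1 h2].
  rewrite lee_fin /speed; nra.
Qed.

Lemma ratio_bound (R : realType) (J : job R) (a : R) (S F : set R) :
  valid_job J -> 1 <= a ->
  ((a * (slope J * (due J - release J)))%:E * lebesgue_measure S <= (work J)%:E)%E ->
  ((work J)%:E <= (slope J * (due J - release J))%:E * lebesgue_measure F)%E ->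
  (lebesgue_measure S <= (a^-1)%:E * lebesgue_measure F)%E.
Proof.
move=> [rd [w0 m0]] a1 h1 h2.
have p0 : 0 < due J - release J by rewrite subr_gt0.
set c := slope J * (due J - release J).
have c0 : 0 < c by rewrite mulr_gt0.
have ac0 : 0 < a * c by rewrite mulr_gt0 //; lra.
rewrite -(@lee_pmul2l _ (a * c)%:E) //.
rewrite muleA -EFinM mulrAC mulrV ?mul1r; last by rewrite unitfE; lra.
exact: (le_trans h1 h2).
Qed.

Theorem mainTheorem6 (R : realType) (m : nat) (jobs : 'I_m -> job R)
  (r d alpha : R) (s : schedule R m) :
  (forall j, valid_job (jobs j)) ->
  feasible jobs ->
  r <= d ->
  (forall j, r <= release (jobs j)) ->
  (forall j, due (jobs j) <= d) ->
  1 <= alpha ->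
  alpha_DLY alpha jobs s ->
  (busy_time s <= ((d - r) / alpha)%:E)%E.
Proof.
move=> hv [s' [ms' hs']] rd hr hd a1 [ms [hst hw]].
rewrite /busy_time.
have fin : finite_set [set: 'I_m] := finite_finset.
have tS : trivIset setT (run_set s).
  by move=> i j _ _ [t [h1 h2]]; move: h1 h2; rewrite /run_set /= => -> [].
have tF : trivIset setT (run_set s').
  by move=> i j _ _ [t [h1 h2]]; move: h1 h2; rewrite /run_set /= => -> [].
rewrite (measure_fin_bigcup lebesgue_measure fin tS); last by move=> i _; exact: ms.
have key : forall j, (lebesgue_measure (run_set s j) <=
   (alpha^-1)%:E * lebesgue_measure (run_set s' j))%E.
  move=> j; have [hsub hwf] := hs' j.

  refine (@ratio_bound R (jobs j) alpha (run_set s j) (run_set s' j) (hv j) a1 _ _).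
    apply: (@dly_bound _ _ _ _ (hv j) a1 (ms j)) => //.
    by move=> t; apply: hst.
  exact: (@feas_bound _ _ _ (hv j) (ms' j) hsub hwf).
apply: (le_trans (y := ((alpha^-1)%:E *
   \sum_(i \in [set: 'I_m]) lebesgue_measure (run_set s' i))%E)).
  rewrite !fsbig_finite // ge0_sume_distrr; last by move=> i _; exact: measure_ge0.
  by apply: lee_sum => i _; exact: key.
rewrite -(measure_fin_bigcup lebesgue_measure fin tF); last by move=> i _; exact: ms'.
have sub : \bigcup_(i in [set: 'I_m]) run_set s' i `<=` [set` `[r, d]].
  move=> t [i _ /(proj1 (hs' i))]; rewrite /= !in_itv /= => /andP[h1 h2].
  by rewrite (le_trans (hr i) h1) (le_trans h2 (hd i)).
apply: (le_trans (y := ((alpha^-1)%:E * lebesgue_measure [set` `[r, d]])%E)).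
  apply: lee_wpmul2l; first by rewrite lee_fin invr_ge0; lra.
  apply: le_measure => //; rewrite inE.
    by apply: fin_bigcup_measurable => // i _; exact: ms'.
  exact: measurable_itv.
rewrite lebesgue_measure_itv /= lte_fin.
case: ifP => _.
  by rewrite -EFinD -EFinM mulrC.
rewrite mule0 lee_fin; apply: mulr_ge0; first lra.
by rewrite invr_ge0; lra.
Qed.
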